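(* Let $\tilde L$ be a minimum-size counterexample. Then every join-irreducible element $j$ of $\tilde L$ satisfies $|{\uparrow}j|>\ell(\tilde L)$.
   Context: The length $\ell(L)$ of a finite lattice $L$ is one less than the maximum number of elements of a chain (totally ordered subset) in $L$. For a poset $P$, $x$ upper covers $y$ if $y<x$ with nothing strictly between; join-irreducible: upper covers exactly one element. For $x\in P$, ${\uparrow}x=\{y: x\le y\}$. A counterexample is a finite lattice $L$ with $|L|>1$ in which every join-irreducible $j$ satisfies $|{\uparrow}j|>|L|/2$; a minimum-size counterexample is a counterexample $\tilde L$ such that no counterexample has fewer elements. *)

(* Defs.v *)
From HB Require Import structures.
From mathcomp Require Import all_boot all_order.
Set Implicit Arguments. Unset Strict Implicit. Unset Printing Implicit Defensive.
Import Order.Theory.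
Local Open Scope order_scope.

Definition covers {d} {T : finPOrderType d} (x y : T) : bool :=
  (y < x) && [forall z : T, ~~ ((y < z) && (z < x))].

Definition join_irreducible {d} {T : finPOrderType d} (j : T) : bool :=
  #|[set y : T | covers j y]| == 1%N.

Definition upset {d} {T : finPOrderType d} (x : T) : {set T} :=
  [set y : T | x <= y].

Definition is_chain {d} {T : finPOrderType d} (S : {set T}) : bool :=
  [forall x in S, forall y in S, (x <= y) || (y <= x)].

Definition lattice_length {d} {T : finPOrderType d} : nat :=
  (\max_(S : {set T} | is_chain S) #|S|).-1.

Definition counterexample {d} (T : finLatticeType d) : Prop :=
  (1 < #|T|)%N /\
  forall j : T, join_irreducible j -> (#|T| < 2 * #|upset j|)%N.

Definition min_counterexample {d} (T : finLatticeType d) : Prop :=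
  counterexample T /\
  forall d' (T' : finLatticeType d'), counterexample T' -> (#|T| <= #|T'|)%N.

(* Main.v *)
Require Import Defs.
From HB Require Import structures.
From mathcomp Require Import all_boot all_order zify.
Import Order.Theory.
Local Open Scope order_scope.

Section Aux.
Context {d : Order.disp_t} {T : finLatticeType d}.

Definition dn (x : T) : {set T} := [set y : T | y <= x].

Lemma dn_lt {x y : T} : x < y -> (#|dn x| < #|dn y|)%N.
Proof.
move=> xy; apply: proper_card; apply/properP; split.
  apply/subsetP => z; rewrite !inE => zx; exact: le_trans zx (ltW xy).
exists y; rewrite !inE ?lexx //.
apply/negP => yx; move: xy; rewrite lt_neqAle => /andP[/eqP ne xy].
by apply: ne; apply: le_anti; rewrite xy yx.
Qed.

Lemma ex_max {P : pred T} {x0} : P x0 -> exists2 m, P m & forall y, P y -> ~~ (m < y).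
Proof.
move=> Px0; case: (arg_maxnP (fun x => #|dn x|) Px0) => m Pm Hm.
exists m => // y Py; apply/negP => my.
by move: (Hm y Py) => /=; rewrite leqNgt (dn_lt my).
Qed.

Lemma ex_min {P : pred T} {x0} : P x0 -> exists2 m, P m & forall y, P y -> ~~ (y < m).
Proof.
move=> Px0; case: (arg_minnP (fun x => #|dn x|) Px0) => m Pm Hm.
exists m => // y Py; apply/negP => my.
by move: (Hm y Py) => /=; rewrite leqNgt (dn_lt my).
Qed.

Lemma key {S : {set T}} : is_chain S -> (1 < #|S|)%N ->
  exists k : T, join_irreducible k /\ (#|upset k| + #|S| <= #|T| + 1)%N.
Proof.
move=> /forallP chS S2.
have chP : forall x y, x \in S -> y \in S -> (x <= y) || (y <= x).
  by move=> x y xS yS; move: (chS x) => /implyP /(_ xS) /forallP /(_ y) /implyP; apply.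
have [x0 x0S] : exists x, x \in S.
  by apply/set0Pn; rewrite -card_gt0 ltnW.
have [m mS mmax] := ex_max x0S.
have {}mS : m \in S by [].
have smax : forall s, s \in S -> s <= m.
  move=> s sS; case/orP: (chP _ _ sS mS) => // ms.
  by have := mmax s sS; rewrite lt_neqAle ms andbT negbK => /eqP ->.
have [x1 x1S] : exists x, x \in S :\ m.
  apply/set0Pn; rewrite -card_gt0.
  by move: S2; rewrite (cardsD1 m S) mS.
have [c cS cmax] := ex_max x1S.
have {}cS : c \in S :\ m by [].
move: cS; rewrite !inE => /andP[cm cS].
have sc : forall s, s \in S -> s != m -> s <= c.
  move=> s sS sm; case/orP: (chP _ _ sS cS) => // cs.
  have : s \in S :\ m by rewrite !inE sm sS.
  by move=> /cmax; rewrite lt_neqAle cs andbT negbK => /eqP ->.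
have cltm : c < m by rewrite lt_neqAle cm smax.
have Pm : ~~ (m <= c) by rewrite lt_geF.
have [k Pk kmin] := ex_min (P := fun x => ~~ (x <= c)) Pm.
have belowk : forall y, y < k -> y <= c.
  by move=> y yk; apply/negPn/negP => H; move: (kmin y H); rewrite yk.
have ck : c `&` k < k.
  rewrite lt_neqAle leIr andbT; apply/eqP => E.
  by move: Pk; rewrite -E leIl.
have [y0 Py0 y0max] := ex_max (P := fun y => y < k) ck.
have covy0 : covers k y0.
  rewrite /covers Py0 /=; apply/forallP => z; apply/negP => /andP[y0z zk].
  by move: (y0max z zk); rewrite y0z.
exists k; split.
  rewrite /join_irreducible; apply/eqP.
  rewrite (_ : [set y | covers k y] = [set y0]) ?cards1 //.
  apply/setP => y; rewrite !inE; apply/idP/idP; last by move/eqP ->.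
  move=> /andP[yk /forallP ycov].
  move: covy0 => /andP[_ /forallP y0cov].
  have jle : y `|` y0 <= c by rewrite leUx !belowk.
  have jk : y `|` y0 < k.
    rewrite lt_neqAle leUx (ltW yk) (ltW Py0) !andbT.
    by apply/eqP => E; move: Pk; rewrite -E jle.
  have yj : y `|` y0 = y.
    apply/eqP; rewrite eq_le leUl andbT; apply/negPn/negP => H.
    have ylt : y < y `|` y0.
      by rewrite lt_neqAle leUl andbT; apply/eqP => E; move: H; rewrite -E lexx.
    by move: (ycov (y `|` y0)); rewrite ylt jk.
  have y0y : y0 <= y by rewrite -yj leUr.
  move: y0y; rewrite le_eqVlt => /orP[/eqP -> //|lt].
  by move: (y0cov y); rewrite lt yk.
have sub : upset k \subset (~: S) :|: [set m].
  apply/subsetP => s; rewrite !inE => ks.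
  case sS: (s \in S) => //=.
  apply/negPn/negP => sm.
  by move: Pk; rewrite (le_trans ks (sc s sS sm)).
have H1 := subset_leq_card sub.
have H2 := leq_card_setU (~: S) [set m].
rewrite cards1 in H2.
have H3 := cardsC S.
move: H2 => [H2 _]. apply: (leq_trans (leq_add (leq_trans H1 H2) (leqnn #|S|))); by rewrite -H3 addnAC addnC (addnC #|S|) addn1 add1n.
Qed.
End Aux.

Theorem theorem2p7 (d : Order.disp_t) (L : finLatticeType d) :
  min_counterexample L ->
  forall j : L, join_irreducible j -> (@lattice_length _ L < #|upset j|)%N.
Proof.
move=> [[L2 ce] _] j jj.
have ju : (0 < #|upset j|)%N by apply/card_gt0P; exists j; rewrite inE lexx.
have [S Sch SE] : {S : {set L} | is_chain S & \max_(S : {set L} | is_chain S) #|S| = #|S|}.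
  apply: eq_bigmax_cond; apply/card_gt0P; exists set0.
  by apply/forallP => x /=; rewrite inE.
rewrite /lattice_length SE.
case: (leqP #|S| 1) => S1.
  by apply: leq_ltn_trans ju; case: #|S| S1 => [|[]].
have [k [kj kb]] := key Sch S1.
have := ce k kj; have := ce j jj.
lia.
Qed.
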